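(* Fix $\rho>1$ and $q\in(0,1)$. For $x,y\in[0,\infty)$ define $$x\oplus_q y=\sup_{p\in[0,1]\cap\mathbb{Q}}\rho^{-\mathrm{KL}(p;q)}x^py^{1-p},\qquad \mathrm{KL}(p;q)=p\log\frac{p}{q}+(1-p)\log\frac{1-p}{1-q}.$$ Then $x\oplus_q y=y\oplus_{1-q}x$ for all $x,y\in[0,\infty)$, and the operation $\oplus_q$ is commutative on $[0,\infty)$ (i.e. $x\oplus_q y=y\oplus_q x$ for all $x,y\ge0$) if and only if $q=1/2$.
   Context: $\log$ is the natural logarithm, $0\log 0:=0$, $0^0:=1$. $\mathrm{KL}(p;q)$ is the Kullback–Leibler divergence of the binary distributions $(p,1-p)$ and $(q,1-q)$. *)

(* Defs.v *)
From HB Require Import structures.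
From mathcomp Require Import all_boot all_order all_algebra.
From mathcomp Require Import all_classical all_reals all_analysis.
Set Implicit Arguments. Unset Strict Implicit. Unset Printing Implicit Defensive.
Import Order.TTheory GRing.Theory Num.Theory.
Local Open Scope classical_set_scope.
Local Open Scope ring_scope.

(* Binary KL divergence KL(p;q) = p log(p/q) + (1-p) log((1-p)/(1-q)).
   The convention 0 log 0 = 0 holds automatically since the factor p
   (resp. 1-p) multiplies the logarithm. *)
Definition KL {R : realType} (p q : R) : R :=
  p * ln (p / q) + (1 - p) * ln ((1 - p) / (1 - q)).

Definition rat01 {R : realType} : set R :=
  [set p | (exists r : rat, p = ratr r) /\ 0 <= p <= 1].

(* x (+)_q y = sup_{p in [0,1] cap Q} rho^{-KL(p;q)} x^p y^(1-p);
   powR satisfies 0 `^ 0 = 1. *)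
Definition oplusq {R : realType} (rho q x y : R) : R :=
  sup [set z | exists2 p, rat01 p &
         z = rho `^ (- KL p q) * x `^ p * y `^ (1 - p)].

(* Main.v *)
Require Import Defs.
From HB Require Import structures.
From mathcomp Require Import all_boot all_order all_algebra.
From mathcomp Require Import all_classical all_reals all_analysis.
From mathcomp Require Import lra ring.
Import Order.TTheory GRing.Theory Num.Theory.
Local Open Scope classical_set_scope.
Local Open Scope ring_scope.

Lemma sup_max_el (R : realType) (S : set R) c : S c -> ubound S c -> sup S = c.
Proof.
move=> Sc ub; apply/le_anti/andP; split.
  by apply: ge_sup => //; exists c.
by apply: ub_le_sup => //; exists c.
Qed.

Lemma rat01_1m (R : realType) (p : R) : rat01 p -> rat01 (1 - p).
Proof.
move=> [[r ->] /andP[h0 h1]]; split.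
  by exists (1 - r); rewrite rmorphB rmorph1.
apply/andP; split; lra.
Qed.

Lemma oneKm {R : realType} (p : R) : 1 - (1 - p) = p.
Proof. by rewrite opprB addrC subrK. Qed.

Lemma KL_1m (R : realType) (p q : R) : KL (1 - p) (1 - q) = KL p q.
Proof. by rewrite /KL !oneKm addrC. Qed.

Lemma KL_1m' (R : realType) (p q : R) : KL (1 - p) q = KL p (1 - q).
Proof. by rewrite -{1}(oneKm q) KL_1m. Qed.

Lemma part1 (R : realType) (rho q x y : R) :
  oplusq rho q x y = oplusq rho (1 - q) y x.
Proof.
rewrite /oplusq; congr sup; apply/seteqP; split => z [p hp ->].
  exists (1 - p); first exact: rat01_1m.
  by rewrite KL_1m oneKm mulrAC.
exists (1 - p); first exact: rat01_1m.
by rewrite KL_1m' oneKm mulrAC.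
Qed.

Lemma val10 (R : realType) (rho q : R) :
  oplusq rho q 1 0 = rho `^ (- KL 1 q).
Proof.
apply: sup_max_el.
  exists 1; last by rewrite subrr powRr0 mulr1 powR1 mulr1.
  split; first by exists 1; rewrite rmorph1.
  by rewrite ler01 lexx.
move=> z [p hp ->]; rewrite powR1 mulr1.
have [->|hp1] := eqVneq p 1; first by rewrite subrr powRr0 mulr1.
rewrite powR0 ?mulr0 ?powR_ge0 //.
by rewrite subr_eq0 eq_sym.
Qed.

Theorem proposition8p3 (R : realType) (rho q : R) (hrho : 1 < rho)
  (hq0 : 0 < q) (hq1 : q < 1) :
  (forall x y : R, 0 <= x -> 0 <= y ->
     oplusq rho q x y = oplusq rho (1 - q) y x) /\
  ((forall x y : R, 0 <= x -> 0 <= y -> oplusq rho q x y = oplusq rho q y x)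
     <-> q = 1 / 2).
Proof.
split; first by move=> x y _ _; exact: part1.
split; last first.
  move=> -> x y _ _; rewrite part1.
  by have -> : 1 - 1 / 2 = 1 / 2 :> R by field.
move=> /(_ 1 0 ler01 (lexx 0)).
rewrite [in RHS]part1 !val10.
have rho0 : rho != 0 by apply: lt0r_neq0; lra.
rewrite /powR (negbTE rho0) => /expR_inj /mulIf.
have lr : ln rho != 0 by apply: lt0r_neq0; rewrite ln_gt0.
move=> /(_ lr) /oppr_inj.
rewrite /KL !subrr !mul0r !addr0 !mul1r.
have q1 : 0 < 1 - q by lra.
move=> h.
have h2 : q^-1 = (1 - q)^-1.
  by apply: ln_inj => //; rewrite posrE invr_gt0.
have h3 : q = 1 - q by apply: invr_inj.
have -> : q = (1 - q + q) / 2 by rewrite -h3; field.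
by rewrite subrK mul1r.
Qed.
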